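(* There exists a probability function $w$ on $SL_3$ satisfying Constant Exchangeability and Predicate Exchangeability (Px) but not Strong Predicate Exchangeability (SPx). Concretely, with the atoms of $L_3$ listed in lexicographic order $\alpha_1,\dots,\alpha_8$ and $\vec b=\langle \tfrac1{19},\tfrac2{19},\tfrac4{19},\tfrac5{19},\tfrac2{19},\tfrac3{19},\tfrac1{19},\tfrac1{19}\rangle$, the function $w=\frac16\sum_{\sigma}w_{\sigma\vec b}$ (sum over the six permutations of atoms induced by permutations of the predicates $P_1,P_2,P_3$) satisfies Px, while the state descriptions $\Theta=\alpha_2(a_1)\wedge\alpha_4(a_2)\wedge\alpha_5(a_3)\wedge\alpha_7(a_4)\wedge\alpha_7(a_5)$ and $\Phi=\alpha_3(a_1)\wedge\alpha_5(a_2)\wedge\alpha_6(a_3)\wedge\alpha_6(a_4)\wedge\alpha_7(a_5)$ have the same P-spectrum but $w(\Theta)\neq w(\Phi)$.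
   Context: $L_q$ is the first-order language with unary predicates $P_1,\dots,P_q$ and constants $a_1,a_2,\dots$. Atoms $\alpha(x)=\bigwedge_{i=1}^q\pm P_i(x)$ are ordered lexicographically: $\alpha_1=\bigwedge P_i$, $\alpha_2=P_1\wedge\dots\wedge P_{q-1}\wedge\neg P_q$, etc., up to $\alpha_{2^q}=\bigwedge\neg P_i$. State descriptions are $\bigwedge_{i=1}^n\alpha_{h_i}(a_i)$. For $\vec x=\langle x_1,\dots,x_{2^q}\rangle$ with $x_j\ge0$, $\sum x_j=1$, the de Finetti function $w_{\vec x}$ is the probability function with $w_{\vec x}(\bigwedge_{i=1}^n\alpha_{h_i}(a_i))=\prod_{i=1}^n x_{h_i}$; a permutation $\sigma$ of atoms acts by $(\sigma\vec x)_{\sigma(j)}=x_j$. $\gamma_q(\alpha)$ is the number of negated predicates in $\alpha$. Px: $w$ is invariant under permuting the predicate symbols in sentences. P-spectrum of $\Theta=\bigwedge_k\alpha_{h_k}(a_k)$: for each $i\in\{0,\dots,q\}$, let $M_i$ be the multiset of sizes of the classes of the relation ''$a_k\sim a_l\iff h_k=h_l$'' on the constants whose atom has exactly $i$ negations; the P-spectrum is $\langle M_0,\dots,M_q\rangle$. SPx: $w(\Theta)=w(\Phi)$ whenever $\Theta,\Phi$ are state descriptions for the same constants with the same P-spectrum. *)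

(* Defs.v *)
From HB Require Import structures.
From mathcomp Require Import all_boot all_order all_algebra all_fingroup.
Set Implicit Arguments. Unset Strict Implicit. Unset Printing Implicit Defensive.
Import Order.TTheory GRing.Theory Num.Theory.
Local Open Scope ring_scope.

(* The language L_3: predicates P_1,P_2,P_3 indexed by 'I_3.
   An atom is given by its sign pattern: a i = true iff P_(i+1) occurs unnegated. *)
Definition atom := {ffun 'I_3 -> bool}.

Definition gamma (a : atom) : nat := #|[pred i | ~~ a i]|.

(* Lexicographic numbering: the atom alpha_(j+1), for j : 'I_8
   (alpha_1 = P1/\P2/\P3, alpha_2 = P1/\P2/\~P3, ..., alpha_8 = all negated). *)
Definition lex_atom (j : 'I_8) : atom :=
  [ffun i : 'I_3 => ~~ odd (j %/ 2 ^ (2 - i))%N].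

(* Inverse numbering: the 0-based lexicographic index of an atom. *)
Definition lex_index (a : atom) : 'I_8 :=
  inord (\sum_(i < 3) (~~ a i) * 2 ^ (2 - i))%N.

(* A state description  /\_{k=1}^n alpha(a_k)  for constants a_1..a_n is the
   sequence of its atoms. *)
Definition statedesc := seq atom.

Definition wdf (x : atom -> rat) (Th : statedesc) : rat := \prod_(a <- Th) x a.

(* Permutation of atoms induced by a permutation tau of the predicate symbols:
   \/ eps_i P_i  |->  /\ eps_i P_(tau i). *)
Definition patom (tau : {perm 'I_3}) (a : atom) : atom := [ffun i => a ((tau^-1)%g i)].

Definition bnum (j : 'I_8) : nat := nth 0%N [:: 1; 2; 4; 5; 2; 3; 1; 1]%N j.
Definition bvec (a : atom) : rat := (bnum (lex_index a))%:R / 19%:R.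

(* sigma b for the atom permutation sigma = patom tau: (sigma b)_(sigma a) = b_a. *)
Definition permvec (tau : {perm 'I_3}) (x : atom -> rat) (a : atom) : rat :=
  x (patom (tau^-1)%g a).

Definition wb (Th : statedesc) : rat :=
  6%:R^-1 * \sum_(tau : {perm 'I_3}) wdf (permvec tau bvec) Th.

(* Probability function on SL_3, determined by its values on state descriptions
   (for the constants a_1,...,a_n). *)
Definition is_prob (w : statedesc -> rat) : Prop :=
  [/\ w [::] = 1,
      forall Th, 0 <= w Th
    & forall Th, w Th = \sum_(a : atom) w (rcons Th a)].

Definition Ex (w : statedesc -> rat) : Prop :=
  forall Th Ph : statedesc, perm_eq Th Ph -> w Th = w Ph.

Definition Px (w : statedesc -> rat) : Prop :=
  forall (tau : {perm 'I_3}) (Th : statedesc), w (map (patom tau) Th) = w Th.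

(* The i-th component M_i of the P-spectrum, as a sorted list (= multiset)
   of sizes of the classes of constants having the same atom, among those
   whose atom has exactly i negations. *)
Definition pspec (Th : statedesc) (i : 'I_4) : seq nat :=
  sort leq [seq count_mem a Th | a <- undup [seq a <- Th | gamma a == i]].

Definition SPx (w : statedesc -> rat) : Prop :=
  forall Th Ph : statedesc, size Th = size Ph ->
    (forall i, pspec Th i = pspec Ph i) -> w Th = w Ph.

Definition Theta : statedesc :=
  [:: lex_atom (inord 1); lex_atom (inord 3); lex_atom (inord 4);
      lex_atom (inord 6); lex_atom (inord 6)].
Definition Phi : statedesc :=
  [:: lex_atom (inord 2); lex_atom (inord 4); lex_atom (inord 5);
      lex_atom (inord 5); lex_atom (inord 6)].

(* Main.v *)
Require Import Defs.
From HB Require Import structures.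
From mathcomp Require Import all_boot all_order all_algebra all_fingroup.
Import Order.TTheory GRing.Theory Num.Theory.
Local Open Scope ring_scope.

Definition o0 : 'I_3 := @Ordinal 3 0 isT.
Definition o1 : 'I_3 := @Ordinal 3 1 isT.
Definition o2 : 'I_3 := @Ordinal 3 2 isT.

Lemma ord3P (i : 'I_3) : i = o0 \/ i = o1 \/ i = o2.
Proof.
case: i => [[|[|[|m]]] Hi]; [left|right;left|right;right|by []]; exact: val_inj.
Qed.

Lemma sum3 (F : 'I_3 -> nat) : (\sum_(i<3) F i = F o0 + F o1 + F o2)%N.
Proof.
rewrite !big_ord_recl big_ord0 addn0 addnA.
by congr (F _ + F _ + F _)%N; apply: val_inj.
Qed.

Definition code (a : atom) : nat := ((~~ a o0) * 4 + (~~ a o1) * 2 + (~~ a o2))%N.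

Lemma code_lt a : (code a < 8)%N.
Proof. by rewrite /code; case: (a o0); case: (a o1); case: (a o2). Qed.

Lemma lex_indexE a : lex_index a = inord (code a).
Proof. by rewrite /lex_index sum3 /code /= muln1. Qed.

Definition bnat (a : atom) : nat := bnum (lex_index a).

Lemma bnatE a : bnat a = nth 0%N [:: 1; 2; 4; 5; 2; 3; 1; 1]%N (code a).
Proof. rewrite /bnat lex_indexE /bnum /=. by rewrite (@inordK 7 (code a)) ?code_lt. Qed.

Lemma lex_atomE j i : lex_atom j i = ~~ odd (j %/ 2 ^ (2 - i))%N.
Proof. by rewrite ffunE. Qed.

Lemma lex_atomK : cancel lex_atom lex_index.
Proof.
move=> j; apply: ord_inj; rewrite lex_indexE inordK ?code_lt // /code !lex_atomE.
by case: j => [[|[|[|[|[|[|[|[|m]]]]]]]] Hj].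
Qed.

Lemma lex_indexK : cancel lex_index lex_atom.
Proof.
move=> a; apply/ffunP => i; rewrite lex_atomE lex_indexE inordK ?code_lt // /code.
by case: (ord3P i) => [->|[->|->]] /=; case: (a o0); case: (a o1); case: (a o2).
Qed.

Lemma patomM t1 t2 a : patom t1 (patom t2 a) = patom (t2 * t1)%g a.
Proof. by apply/ffunP => i; rewrite !ffunE invMg permM. Qed.

Lemma patom1 a : patom 1%g a = a.
Proof. by apply/ffunP => i; rewrite !ffunE invg1 perm1. Qed.

Lemma patom_inj t : injective (patom t).
Proof.
by move=> a b /(congr1 (patom t^-1)); rewrite !patomM mulgV !patom1.
Qed.

Lemma sum_bvec : \sum_(a : atom) bvec a = 1.
Proof.
rewrite (reindex lex_atom) /=; last first.
  by apply: onW_bij; exact: (Bijective lex_atomK lex_indexK).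
under eq_bigr do rewrite /bvec lex_atomK.
rewrite -mulr_suml -natr_sum !big_ord_recl big_ord0 /=.
by rewrite divff.
Qed.

Lemma sum_permvec t : \sum_(a : atom) permvec t bvec a = 1.
Proof.
rewrite (reindex_inj (patom_inj t)) /=.
under eq_bigr do rewrite /permvec patomM mulgV patom1.
exact: sum_bvec.
Qed.

Definition pf (x y z : 'I_3) (i : 'I_3) : 'I_3 :=
  if nat_of_ord i == 0%N then x else if nat_of_ord i == 1%N then y else z.

Lemma pf_inj x y z : uniq [:: x; y; z] -> injective (pf x y z).
Proof.
move=> U i j.
case: (ord3P i) => [->|[->|->]]; case: (ord3P j) => [->|[->|->]]; rewrite /pf //= => E;
  by move: U; rewrite E /= !inE eqxx ?orbT ?andbF.
Qed.

Definition p012 := perm (@pf_inj o0 o1 o2 isT).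
Definition p021 := perm (@pf_inj o0 o2 o1 isT).
Definition p102 := perm (@pf_inj o1 o0 o2 isT).
Definition p120 := perm (@pf_inj o1 o2 o0 isT).
Definition p201 := perm (@pf_inj o2 o0 o1 isT).
Definition p210 := perm (@pf_inj o2 o1 o0 isT).
Definition plist := [:: p012; p021; p102; p120; p201; p210].

Lemma plist_uniq : uniq plist.
Proof.
apply: (@map_uniq _ _ (fun t : {perm 'I_3} => (nat_of_ord (t o0), nat_of_ord (t o1)))).
by rewrite /= !permE.
Qed.

Lemma plist_all t : t \in plist.
Proof.
have H : #|plist| = #|{perm 'I_3}|.
  by rewrite (card_uniqP plist_uniq) card_Sn.
have := subset_cardP H (subset_predT _).
by move=> E; have := E t; rewrite inE => ->.
Qed.

Lemma sumP (F : {perm 'I_3} -> rat) : \sum_t F t = \sum_(t <- plist) F t.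
Proof. by rewrite (big_uniq _ plist_uniq); apply: eq_bigl => t; rewrite plist_all. Qed.

Lemma bvec_ge0 a : 0 <= bvec a.
Proof. by rewrite /bvec divr_ge0 ?ler0n. Qed.

Lemma wb_prob : is_prob wb.
Proof.
split.
- rewrite /wb sumP /plist !big_cons big_nil /wdf !big_nil.
  by rewrite !addrA -mulr_natr mulVf.
- move=> Th; rewrite /wb mulr_ge0 ?invr_ge0 ?ler0n //.
  apply: sumr_ge0 => t _; apply: prodr_ge0 => a _; exact: bvec_ge0.
- move=> Th; rewrite /wb -mulr_sumr; congr (_ * _).
  rewrite exchange_big /=; apply: eq_bigr => t _.
  under eq_bigr do rewrite /wdf -cats1 big_cat big_seq1 /=.
  by rewrite -mulr_sumr sum_permvec mulr1.
Qed.

Lemma wb_Ex : Ex wb.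
Proof.
move=> Th Ph P; rewrite /wb; congr (_ * _); apply: eq_bigr => t _.
exact: perm_big.
Qed.

Lemma wb_Px : Px wb.
Proof.
move=> s Th; rewrite /wb; congr (_ * _).
rewrite [RHS](reindex_inj (@mulIg _ (s^-1)%g)) /=.
apply: eq_bigr => t _; rewrite /wdf big_map; apply: eq_bigr => a _.
by rewrite /permvec patomM invMg invgK.
Qed.

Lemma lex_atom_inj : injective lex_atom.
Proof. exact: can_inj lex_atomK. Qed.

Definition g8 (x : 'I_8) : nat := (odd (x %/ 4) + odd (x %/ 2) + odd x)%N.

Lemma gamma_lex x : gamma (lex_atom x) = g8 x.
Proof.
rewrite /gamma -sum1_card big_mkcond /= sum3 !inE !lex_atomE /g8 /= divn1.
by case: (odd (x %/ 4)); case: (odd (x %/ 2)); case: (odd x).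
Qed.

Lemma pspec_map s i : pspec (map lex_atom s) i =
  sort leq [seq count_mem x s | x <- undup [seq x <- s | g8 x == i]].
Proof.
rewrite /pspec filter_map undup_map_inj; last exact: lex_atom_inj.
rewrite -map_comp; congr (sort _ _).
have -> : [seq x <- s | preim lex_atom (fun a => gamma a == i) x] =
          [seq x <- s | g8 x == i].
  by apply: eq_filter => x /=; rewrite gamma_lex.
apply: eq_map => x /=; rewrite count_map; apply: eq_count => y /=.
by rewrite inj_eq //; exact: lex_atom_inj.
Qed.

Lemma ThetaE : Theta = map lex_atom
  [:: Ordinal (isT : (1 < 8)%N); Ordinal (isT : (3 < 8)%N); Ordinal (isT : (4 < 8)%N);
      Ordinal (isT : (6 < 8)%N); Ordinal (isT : (6 < 8)%N)].
Proof. by rewrite /Theta /=; congr [:: lex_atom _; lex_atom _; lex_atom _; lex_atom _; lex_atom _]; apply: ord_inj; rewrite inordK. Qed.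

Lemma PhiE : Phi = map lex_atom
  [:: Ordinal (isT : (2 < 8)%N); Ordinal (isT : (4 < 8)%N); Ordinal (isT : (5 < 8)%N);
      Ordinal (isT : (5 < 8)%N); Ordinal (isT : (6 < 8)%N)].
Proof. by rewrite /Phi /=; congr [:: lex_atom _; lex_atom _; lex_atom _; lex_atom _; lex_atom _]; apply: ord_inj; rewrite inordK. Qed.

Lemma pspec_eq i : pspec Theta i = pspec Phi i.
Proof.
rewrite ThetaE PhiE !pspec_map.
by case: i => [[|[|[|[|m]]]] Hi] //; vm_compute.
Qed.

Lemma wdf_nat t Th : wdf (permvec t bvec) Th =
  (\prod_(a <- Th) bnat (patom t^-1 a))%:R / 19%:R ^+ size Th.
Proof.
elim: Th => [|a Th IH]; first by rewrite /wdf !big_nil expr0 divr1.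
rewrite /wdf big_cons -/(wdf _ _) IH big_cons natrM /= exprS /permvec /bvec.
rewrite -/(bnat _) invfM; set u := (_ ^+ _)^-1; set v := (19%:R)^-1.
by rewrite mulrACA.
Qed.

Lemma wb_nat Th : wb Th = 6%:R^-1 *
  ((\sum_(t <- plist) \prod_(a <- Th) bnat (patom t^-1 a))%:R / 19%:R ^+ size Th).
Proof.
rewrite /wb sumP natr_sum mulr_suml; congr (_ * _); apply: eq_bigr => t _.
exact: wdf_nat.
Qed.

Lemma wb_neq : wb Theta <> wb Phi.
Proof.
rewrite !wb_nat => /eqP.
rewrite (can_eq (mulKf _)) ?invr_eq0 ?pnatr_eq0 //.
have -> : size Phi = size Theta by [].
rewrite (can_eq (divfK _)) ?expf_neq0 ?pnatr_eq0 // eqr_nat.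
rewrite ThetaE PhiE /plist !big_cons !big_nil !bnatE /code !ffunE !invgK !permE /pf /=.
by vm_compute.
Qed.

Theorem mainTheorem2 :
  (exists w : statedesc -> rat, [/\ is_prob w, Ex w, Px w & ~ SPx w]) /\
  [/\ is_prob wb, Ex wb, Px wb,
      (forall i, pspec Theta i = pspec Phi i) & wb Theta <> wb Phi].
Proof.
split; last by split; [exact: wb_prob|exact: wb_Ex|exact: wb_Px|exact: pspec_eq|exact: wb_neq].
exists wb; split; [exact: wb_prob|exact: wb_Ex|exact: wb_Px|].
by move=> H; apply: wb_neq; apply: H => //; exact: pspec_eq.
Qed.
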